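(* Let $(X,\beta)$ be a finite wGKAT automaton and let $\bar\partial$ be the unique transition map on $\mathrm{Exp}/{\equiv}$ making the quotient map $[-]_\equiv:\mathrm{Exp}\to\mathrm{Exp}/{\equiv}$ a homomorphism from $(\mathrm{Exp},\partial)$ to $(\mathrm{Exp}/{\equiv},\bar\partial)$. A map $h:X\to\mathrm{Exp}$ is a solution up to $\equiv$ of the system associated with $(X,\beta)$ if and only if $[-]_\equiv\circ h$ is a homomorphism of wGKAT automata from $(X,\beta)$ to $(\mathrm{Exp}/{\equiv},\bar\partial)$.
   Context: Fix a finite set $T$ of primitive tests, a set $\mathrm{Act}$ of atomic actions, a set $\mathrm{Out}$ of return values, and a semiring $(S,+,\cdot,0,1)$ that is positive ($x+y=0\Rightarrow x=y=0$), refinement (whenever $x+y=z+w$ there exist $s,t,u,v$ with $s+t=x$, $s+u=z$, $u+v=y$, $t+v=w$) and Conway (with ${}^*:S\to S$ satisfying $(a+b)^*=a^*(ba^* )^*$, $(ab)^*=1+a(ba)^*b$). Tests: $b,c\in\mathrm{BExp}::=\mathtt{0}\mid\mathtt{1}\mid t\ (t\in T)\mid\bar b\mid b+c\mid bc$ ($\mathtt 0,\mathtt 1$ false/true, distinct from semiring $0,1$); $\equiv_{BA}$ is Boolean equivalence; $\mathrm{At}$ is the finite set of atoms of the free Boolean algebra on $T$, atoms also regarded as tests; $\alpha\le b$ means $\alpha$ entails $b$. Expressions: $e,f\in\mathrm{Exp}::= p\in\mathrm{Act}\mid b\in\mathrm{BExp}\mid e+_b f\mid e;f\mid e^{(b)}\mid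 v\in\mathrm{Out}\mid e\oplus_{r,s} f\ (r,s\in S)$; $\odot r:=\mathtt 1\oplus_{r,0}\mathtt 0$. $\mathcal M_\omega(X)$: finitely supported maps $X\to S$, pointwise operations; $\delta_x$ indicator of $x$; $\nu[A]=\sum_{x\in A}\nu(x)$; $\mathrm{supp}(\nu)=\{x:\nu(x)\ne0\}$. A wGKAT automaton is $(X,\beta)$ with $\beta:X\to\mathcal M_\omega(\{\mathsf{acc},\mathsf{rej}\}+\mathrm{Out}+\mathrm{Act}\times X)^{\mathrm{At}}$. A map $h:X\to Y$ between automata $(X,\beta),(Y,\gamma)$ is a homomorphism if for all $x,\alpha$: $\gamma(h(x))_\alpha(o)=\beta(x)_\alpha(o)$ for $o\in\{\mathsf{acc},\mathsf{rej}\}+\mathrm{Out}$, and $\gamma(h(x))_\alpha(p,y)=\beta(x)_\alpha[\{p\}\times h^{-1}(y)]$. The derivative automaton $(\mathrm{Exp},\partial)$: $\partial(b)_\alpha=\delta_{\mathsf{acc}}$ if $\alpha\le b$, else $\delta_{\mathsf{rej}}$; $\partial(v)_\alpha=\delta_v$; $\partial(p)_\alpha=\delta_{(p,\mathtt 1)}$; $\partial(e+_bf)_\alpha=\partial(e)_\alpha$ if $\alpha\le b$, else $\partial(f)_\alpha$; $\partial(e\oplus_{r,s}f)_\alpha=r\partial(e)_\alpha+s\partial(f)_\alpha$; $\partial(e;f)_\alpha=\sum_x\partial(e)_\alpha(x)c_{\alpha,f}(x)$ with $c_{\alpha,f}(\mathsf{acc})=\partial(f)_\alpha$, $c_{\alpha,f}(x)=\delta_x$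 for $x\in\{\mathsf{rej}\}\cup\mathrm{Out}$, $c_{\alpha,f}(p,e')=\delta_{(p,e';f)}$; $\partial(e^{(b)})_\alpha(x)$ is $1$ if $x=\mathsf{acc}$ and $\alpha\le\bar b$; $\partial(e)_\alpha(\mathsf{acc})^*\partial(e)_\alpha(x)$ if $x\in\{\mathsf{rej}\}\cup\mathrm{Out}$ and $\alpha\le b$; $\partial(e)_\alpha(\mathsf{acc})^*\partial(e)_\alpha(p,e')$ if $x=(p,e';e^{(b)})$ and $\alpha\le b$; $0$ otherwise. Generalized guarded sum: $\mathrm{GS}_{\alpha\in\emptyset}e_\alpha:=\mathtt 0$, $\mathrm{GS}_{\alpha\in\Phi}e_\alpha:=e_\gamma+_\gamma\mathrm{GS}_{\alpha\in\Phi\setminus\{\gamma\}}e_\alpha$ ($\gamma\in\Phi$); generalized weighted sum: $\bigoplus_{i\in I}r_i\cdot e_i:=e_j\oplus_{r_j,1}\big(\bigoplus_{i\in I\setminus\{j\}}r_i\cdot e_i\big)$ ($j\in I$), the empty weighted sum being $\odot0$; both well defined up to $\equiv$. The system associated with $(X,\beta)$ assigns to each $x\in X$ the formal term $\tau(x)=\mathrm{GS}_{\alpha\in\mathrm{At}}\big(\bigoplus_{d\in\mathrm{supp}(\beta(x)_\alpha)}\beta(x)_\alpha(d)\cdot\mathrm{sys}(d)\big)$ with $\mathrm{sys}(\mathsf{rej})=\mathtt 0$, $\mathrm{sys}(\mathsf{acc})=\mathtt 1$, $\mathrm{sys}(v)=v$, $\mathrm{sys}(p,x')=p\,x'$ (a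 formal product of the expression $p$ with the indeterminate $x'$). For $h:X\to\mathrm{Exp}$, $h^\#(\tau(x))\in\mathrm{Exp}$ is obtained by replacing each formal product $g\,x'$ by $g;h(x')$ (and keeping expressions, guarded choices and weighted choices as they are). $h$ is a solution up to $\equiv$ if $h(x)\equiv h^\#(\tau(x))$ for all $x\in X$. $E:\mathrm{Exp}\to S^{\mathrm{At}}$: $E(p)_\alpha=E(v)_\alpha=0$; $E(b)_\alpha=1$ if $\alpha\le b$ else $0$; $E(e\oplus_{r,s}f)_\alpha=rE(e)_\alpha+sE(f)_\alpha$; $E(e+_bf)_\alpha=E(e)_\alpha$ if $\alpha\le b$ else $E(f)_\alpha$; $E(e;f)_\alpha=E(e)_\alpha E(f)_\alpha$; $E(e^{(b)})_\alpha=E(\bar b)_\alpha$. The relation $\equiv$ is the smallest congruence on $\mathrm{Exp}$ (tests taken up to $\equiv_{BA}$; sequencing binds tighter than $\oplus$, $\odot$ binds tightest) containing, for all $e,f,g\in\mathrm{Exp}$, tests $b,c$, $v\in\mathrm{Out}$, $r,s,t,u\in S$: (G1) $e+_be\equiv e$; (G2) $e+_bf\equiv b;e+_bf$; (G3) $e+_bf\equiv f+_{\bar b}e$; (G4) $(e+_bf)+_cg\equiv e+_{bc}(f+_cg)$; (D1) $e\oplus_{r,s}(f+_bg)\equiv(e\oplus_{r,s}f)+_b(e\oplus_{r,s}g)$; (D2) $e\oplus_{r,s}(f\oplus_{t,u}g)\equiv e\oplus_{r,1}(f\oplus_{st,su}g)$; (D3) $b;(e\oplus_{r,s}f)\equiv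 b;(b;e\oplus_{r,s}b;f)$; (S1) $\mathtt 1;e\equiv e\equiv e;\mathtt 1$; (S2) $(e;f);g\equiv e;(f;g)$; (S3) $\mathtt 0;e\equiv\mathtt 0$; (S4) $(e\oplus_{r,s}f);g\equiv e;g\oplus_{r,s}f;g$; (S5) $(e+_bf);g\equiv e;g+_bf;g$; (S6) $v;e\equiv v$; (S7) $b;c\equiv bc$; (L1) $e^{(b)}\equiv e;e^{(b)}+_b\mathtt 1$; (C1) $\odot1\equiv\mathtt 1$; (C2) $\odot0;e\equiv\odot0$; (W1) $e\oplus_{r,s}e\equiv\odot(r+s);e$; (W2) $e\oplus_{r,s}f\equiv f\oplus_{s,r}e$; (W3) $e\oplus_{r,s}(f\oplus_{t,u}g)\equiv(e\oplus_{r,st}f)\oplus_{1,su}g$; (W4) $e\oplus_{ru,s}f\equiv(\odot u;e)\oplus_{r,s}f$; and closed under the rules (L2) if $e\equiv(f\oplus_{r,s}\mathtt 1)+_cg$ then $c;e^{(b)}\equiv c;((\odot(s^*r);f;e^{(b)})+_b\mathtt 1)$; (F1) if $g\equiv e;g+_bf$ and $E(e)_\alpha=0$ for all $\alpha\in\mathrm{At}$ then $g\equiv e^{(b)};f$. *)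

(* Defs.v *)
From HB Require Import structures.
From mathcomp Require Import all_boot all_order all_algebra.
From mathcomp Require Import boolp.
Set Implicit Arguments. Unset Strict Implicit. Unset Printing Implicit Defensive.
Import GRing.Theory.
Local Open Scope ring_scope.

Definition positive_sr (S : pzSemiRingType) : Prop :=
  forall x y : S, x + y = 0 -> x = 0 /\ y = 0.
Definition refinement_sr (S : pzSemiRingType) : Prop :=
  forall x y z w : S, x + y = z + w ->
    exists s t u v : S, [/\ s + t = x, s + u = z, u + v = y & t + v = w].
Definition conway_star (S : pzSemiRingType) (star : S -> S) : Prop :=
  forall a b : S, star (a + b) = star a * star (b * star a) /\
                  star (a * b) = 1 + a * star (b * a) * b.

Inductive bexp (T : Type) : Type :=
| BZero | BOne | BVar of T | BNot of bexp T | BOr of bexp T & bexp T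
| BAnd of bexp T & bexp T.
Arguments BZero {T}. Arguments BOne {T}.

(* atoms of the free Boolean algebra on T = valuations T -> bool *)
Definition atom (T : finType) := {ffun T -> bool}.

Fixpoint beval (T : finType) (b : bexp T) (a : atom T) : bool :=
  match b with
  | BZero => false | BOne => true | BVar t => a t
  | BNot b => ~~ beval b a
  | BOr b c => beval b a || beval c a
  | BAnd b c => beval b a && beval c a
  end.
Definition leA (T : finType) (a : atom T) (b : bexp T) := beval b a.
Definition equivBA (T : finType) (b c : bexp T) := forall a : atom T, beval b a = beval c a.
Definition atom_test (T : finType) (a : atom T) : bexp T :=
  foldr (fun t acc => BAnd (if a t then BVar t else BNot (BVar t)) acc) BOne (enum T).

Section Exp.
Variables (S : pzSemiRingType) (T : finType) (Act Out : Type).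

Inductive exp : Type :=
| EAct of Act
| ETest of bexp T
| EGuard of bexp T & exp & exp
| ESeq of exp & exp
| ELoop of bexp T & exp
| ERet of Out
| EWeight of S & S & exp & exp.

Definition eone : exp := ETest BOne.
Definition ezero : exp := ETest BZero.
Definition odot (r : S) : exp := EWeight r 0 eone ezero.
End Exp.
Arguments eone {S T Act Out}.
Arguments odot {S T Act Out}.
Arguments ETest {S} {T} {Act Out}.
Arguments ERet {S T Act} {Out}.
Arguments EAct {S T} {Act} {Out}. Arguments ezero {S T Act Out}.

Inductive outcome (Out Act Y : Type) : Type :=
| Acc | Rej | Ret of Out | Step of Act & Y.
Arguments Acc {Out Act Y}. Arguments Rej {Out Act Y}.
Arguments Ret {Out Act Y}. Arguments Step {Out Act Y}.

Definition out2sum (Out Act Y : Type) (o : outcome Out Act Y) : (bool + Out) + (Act * Y) :=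
  match o with
  | Acc => inl (inl true) | Rej => inl (inl false)
  | Ret v => inl (inr v) | Step p y => inr (p, y) end.
Definition sum2out (Out Act Y : Type) (s : (bool + Out) + (Act * Y)) : outcome Out Act Y :=
  match s with
  | inl (inl true) => Acc | inl (inl false) => Rej
  | inl (inr v) => Ret v | inr (p, y) => Step p y end.
Lemma out2sumK (Out Act Y : Type) : cancel (@out2sum Out Act Y) (@sum2out Out Act Y).
Proof. by case. Qed.
HB.instance Definition _ (Out Act Y : eqType) :=
  Equality.copy (outcome Out Act Y) (can_type (@out2sumK Out Act Y)).

(* Finitely supported weightings M_w(Y), represented as finite formal sums
   (lists of (point, weight)); nu(x) and nu[A] are computed from them. *)
Section Measures.
Variables (S : pzSemiRingType).
Definition mw (Y : Type) := seq (Y * S).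
Definition mass (Y : Type) (nu : mw Y) (A : Y -> Prop) : S :=
  \sum_(x <- nu | `[< A x.1 >]) x.2.
Definition ev (Y : Type) (nu : mw Y) (y : Y) : S := mass nu (fun z => z = y).
Definition scale (Y : Type) (r : S) (nu : mw Y) : mw Y := [seq (x.1, r * x.2) | x <- nu].
End Measures.

Definition wgkat_trans (S : pzSemiRingType) (T : finType) (Act Out Y : Type) :=
  Y -> atom T -> mw S (outcome Out Act Y).

Definition is_hom (S : pzSemiRingType) (T : finType) (Act Out Y Z : Type)
  (bY : wgkat_trans S T Act Out Y) (bZ : wgkat_trans S T Act Out Z) (h : Y -> Z) : Prop :=
  forall (y : Y) (a : atom T),
    [/\ ev (bZ (h y) a) Acc = ev (bY y a) Acc,
        ev (bZ (h y) a) Rej = ev (bY y a) Rej,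
        (forall v : Out, ev (bZ (h y) a) (Ret v) = ev (bY y a) (Ret v)) &
        (forall (p : Act) (z : Z),
            ev (bZ (h y) a) (Step p z) =
            mass (bY y a) (fun o => exists y', o = Step p y' /\ h y' = z))].

Section Deriv.
Variables (S : pzSemiRingType) (star : S -> S) (T : finType) (Act Out : Type).
Local Notation exp := (exp S T Act Out).
Local Notation outc := (outcome Out Act exp).

Definition acc_weight (nu : mw S outc) : S :=
  \sum_(x <- nu) (if x.1 is Acc then x.2 else 0).

Fixpoint wderiv (e : exp) (a : atom T) : mw S outc :=
  match e with
  | ETest b => if leA a b then [:: (Acc, 1)] else [:: (Rej, 1)]
  | ERet v => [:: (Ret v, 1)]
  | EAct p => [:: (Step p eone, 1)]
  | EGuard b e f => if leA a b then wderiv e a else wderiv f a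
  | EWeight r s e f => scale r (wderiv e a) ++ scale s (wderiv f a)
  | ESeq e f =>
      let de := wderiv e a in let df := wderiv f a in
      flatten [seq match x.1 with
                   | Acc => scale x.2 df
                   | Rej => [:: (Rej, x.2)]
                   | Ret v => [:: (Ret v, x.2)]
                   | Step p e' => [:: (Step p (ESeq e' f), x.2)]
                   end | x <- de]
  | ELoop b e =>
      if ~~ leA a b then [:: (Acc, 1)] else
      let de := wderiv e a in let c := star (acc_weight de) in
      flatten [seq match x.1 with
                   | Acc => [::]
                   | Rej => [:: (Rej, c * x.2)]
                   | Ret v => [:: (Ret v, c * x.2)]
                   | Step p e' => [:: (Step p (ESeq e' (ELoop b e)), c * x.2)]
                   end | x <- de]
  end.

Fixpoint Eterm (e : exp) (a : atom T) : S :=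
  match e with
  | EAct _ | ERet _ => 0
  | ETest b => if leA a b then 1 else 0
  | EWeight r s e f => r * Eterm e a + s * Eterm f a
  | EGuard b e f => if leA a b then Eterm e a else Eterm f a
  | ESeq e f => Eterm e a * Eterm f a
  | ELoop b _ => if leA a (BNot b) then 1 else 0
  end.

Inductive wequiv : exp -> exp -> Prop :=
| eq_refl e : wequiv e e
| eq_sym e f : wequiv e f -> wequiv f e
| eq_trans e f g : wequiv e f -> wequiv f g -> wequiv e g
| eq_test b c : equivBA b c -> wequiv (ETest b) (ETest c)
| eq_guard b c e e' f f' : equivBA b c -> wequiv e e' -> wequiv f f' ->
    wequiv (EGuard b e f) (EGuard c e' f')
| eq_seq e e' f f' : wequiv e e' -> wequiv f f' -> wequiv (ESeq e f) (ESeq e' f')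
| eq_loop b c e e' : equivBA b c -> wequiv e e' -> wequiv (ELoop b e) (ELoop c e')
| eq_weight r s e e' f f' : wequiv e e' -> wequiv f f' ->
    wequiv (EWeight r s e f) (EWeight r s e' f')
| ax_G1 b e : wequiv (EGuard b e e) e
| ax_G2 b e f : wequiv (EGuard b e f) (EGuard b (ESeq (ETest b) e) f)
| ax_G3 b e f : wequiv (EGuard b e f) (EGuard (BNot b) f e)
| ax_G4 b c e f g : wequiv (EGuard c (EGuard b e f) g) (EGuard (BAnd b c) e (EGuard c f g))
| ax_D1 r s b e f g : wequiv (EWeight r s e (EGuard b f g))
    (EGuard b (EWeight r s e f) (EWeight r s e g))
| ax_D2 r s t u e f g : wequiv (EWeight r s e (EWeight t u f g))
    (EWeight r 1 e (EWeight (s * t) (s * u) f g))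
| ax_D3 b r s e f : wequiv (ESeq (ETest b) (EWeight r s e f))
    (ESeq (ETest b) (EWeight r s (ESeq (ETest b) e) (ESeq (ETest b) f)))
| ax_S1l e : wequiv (ESeq eone e) e
| ax_S1r e : wequiv e (ESeq e eone)
| ax_S2 e f g : wequiv (ESeq (ESeq e f) g) (ESeq e (ESeq f g))
| ax_S3 e : wequiv (ESeq ezero e) ezero
| ax_S4 r s e f g : wequiv (ESeq (EWeight r s e f) g) (EWeight r s (ESeq e g) (ESeq f g))
| ax_S5 b e f g : wequiv (ESeq (EGuard b e f) g) (EGuard b (ESeq e g) (ESeq f g))
| ax_S6 v e : wequiv (ESeq (ERet v) e) (ERet v)
| ax_S7 b c : wequiv (ESeq (ETest b) (ETest c)) (ETest (BAnd b c))
| ax_L1 b e : wequiv (ELoop b e) (EGuard b (ESeq e (ELoop b e)) eone)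
| ax_C1 : wequiv (odot 1) eone
| ax_C2 e : wequiv (ESeq (odot 0) e) (odot 0)
| ax_W1 r s e : wequiv (EWeight r s e e) (ESeq (odot (r + s)) e)
| ax_W2 r s e f : wequiv (EWeight r s e f) (EWeight s r f e)
| ax_W3 r s t u e f g : wequiv (EWeight r s e (EWeight t u f g))
    (EWeight 1 (s * u) (EWeight r (s * t) e f) g)
| ax_W4 r s u e f : wequiv (EWeight (r * u) s e f) (EWeight r s (ESeq (odot u) e) f)
| rule_L2 b c e f g r s : wequiv e (EGuard c (EWeight r s f eone) g) ->
    wequiv (ESeq (ETest c) (ELoop b e))
          (ESeq (ETest c)
             (EGuard b (ESeq (odot (star s * r)) (ESeq f (ELoop b e))) eone))
| rule_F1 b e f g : wequiv g (EGuard b (ESeq e g) f) ->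
    (forall a : atom T, Eterm e a = 0) -> wequiv g (ESeq (ELoop b e) f).

End Deriv.

Section Systems.
Variables (S : pzSemiRingType) (T : finType) (Act Out : eqType) (X : finType).
Local Notation exp := (exp S T Act Out).

(* formal terms over indeterminates X *)
Inductive sterm : Type :=
| SExp of exp
| SProd of exp & X
| SGuard of bexp T & sterm & sterm
| SWeight of S & S & sterm & sterm.

Fixpoint GS (atoms : seq (atom T)) (F : atom T -> sterm) : sterm :=
  match atoms with
  | [::] => SExp ezero
  | a :: rest => SGuard (atom_test a) (F a) (GS rest F)
  end.
Fixpoint WS (I : Type) (idx : seq I) (r : I -> S) (F : I -> sterm) : sterm :=
  match idx with
  | [::] => SExp (odot 0)
  | j :: rest => SWeight (r j) 1 (F j) (WS rest r F)
  end.

Definition sys (d : outcome Out Act X) : sterm :=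
  match d with
  | Rej => SExp ezero | Acc => SExp eone
  | Ret v => SExp (ERet v)
  | Step p x' => SProd (EAct p) x'
  end.

Definition supp (nu : mw S (outcome Out Act X)) : seq (outcome Out Act X) :=
  [seq d <- undup (map fst nu) | ev nu d != 0].

Definition tau (beta : wgkat_trans S T Act Out X) (x : X) : sterm :=
  GS (enum (atom T)) (fun a =>
     WS (supp (beta x a)) (fun d => ev (beta x a) d) sys).

Fixpoint hsharp (h : X -> exp) (t : sterm) : exp :=
  match t with
  | SExp e => e
  | SProd g x' => ESeq g (h x')
  | SGuard b t u => EGuard b (hsharp h t) (hsharp h u)
  | SWeight r s t u => EWeight r s (hsharp h t) (hsharp h u)
  end.

Definition is_solution (star : S -> S) (beta : wgkat_trans S T Act Out X) (h : X -> exp) :=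
  forall x : X, wequiv star (h x) (hsharp h (tau beta x)).
End Systems.

(* Main.v *)
Require Import Defs.
From HB Require Import structures.
From mathcomp Require Import all_boot all_order all_algebra.
From mathcomp Require Import boolp.
From Stdlib Require Import Permutation.
From mathcomp Require Import zify.
From Stdlib Require Import Lia.
Unset Implicit Arguments.
Import GRing.Theory.

Section Eqns.
Local Open Scope ring_scope.
Variables (S : pzSemiRingType) (star : S -> S) (T : finType) (Act Out : eqType).
Local Notation exp := (exp S T Act Out).
Local Notation "e === f" := (wequiv star e f) (at level 70).
Local Notation "e +[ b ] f" := (EGuard b e f) (at level 50).
Local Notation "e ;; f" := (ESeq e f) (at level 40).

Lemma wr {e : exp} : e === e. Proof. exact: Defs.eq_refl. Qed.
Lemma ws {e f : exp} : e === f -> f === e. Proof. exact: Defs.eq_sym. Qed.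
Lemma wt {f e g : exp} : e === f -> f === g -> e === g. Proof. by move=> H1 H2; exact: Defs.eq_trans H1 H2. Qed.
Lemma cseq {e e' f f' : exp} : e === e' -> f === f' -> e ;; f === e' ;; f'.
Proof. exact: eq_seq. Qed.
Lemma cseql {e e' f : exp} : e === e' -> e ;; f === e' ;; f.
Proof. by move=> H; apply: eq_seq H wr. Qed.
Lemma cseqr {e f f' : exp} : f === f' -> e ;; f === e ;; f'.
Proof. by move=> H; apply: eq_seq wr H. Qed.
Lemma cg {b : bexp T} {e e' f f' : exp} : e === e' -> f === f' -> e +[b] f === e' +[b] f'.
Proof. by move=> H1 H2; apply: eq_guard. Qed.
Lemma cgb {b c : bexp T} {e f : exp} : equivBA b c -> e +[b] f === e +[c] f.
Proof. by move=> H; apply: eq_guard H wr wr. Qed.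
Lemma ctest {b c : bexp T} : equivBA b c -> (ETest b : exp) === ETest c.
Proof. exact: eq_test. Qed.
Lemma cw {r s : S} {e e' f f' : exp} : e === e' -> f === f' -> EWeight r s e f === EWeight r s e' f'.
Proof. by move=> H1 H2; apply: eq_weight. Qed.
Lemma cwS {r s : S} (r' s' : S) {e f : exp} : r = r' -> s = s' -> EWeight r s e f === EWeight r' s' e f.
Proof. by move=> -> ->; apply: wr. Qed.


Lemma G1 {b : bexp T} {e : exp} : e +[b] e === e. Proof. exact: ax_G1. Qed.
Lemma G2 {b : bexp T} {e f : exp} : e +[b] f === (ETest b ;; e) +[b] f. Proof. exact: ax_G2. Qed.
Lemma G3 {b : bexp T} {e f : exp} : e +[b] f === f +[BNot b] e. Proof. exact: ax_G3. Qed.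
Lemma G4 {b c : bexp T} {e f g : exp} : (e +[b] f) +[c] g === e +[BAnd b c] (f +[c] g). Proof. exact: ax_G4. Qed.
Lemma D1 {r s : S} {b : bexp T} {e f g : exp} : EWeight r s e (f +[b] g) === (EWeight r s e f) +[b] (EWeight r s e g). Proof. exact: ax_D1. Qed.
Lemma D2 {r s t u : S} {e f g : exp} : EWeight r s e (EWeight t u f g) === EWeight r 1 e (EWeight (s * t) (s * u) f g). Proof. exact: ax_D2. Qed.
Lemma D3 {b : bexp T} {r s : S} {e f : exp} : ETest b ;; EWeight r s e f === ETest b ;; EWeight r s (ETest b ;; e) (ETest b ;; f). Proof. exact: ax_D3. Qed.
Lemma S1l {e : exp} : eone ;; e === e. Proof. exact: ax_S1l. Qed.
Lemma S1r {e : exp} : e === e ;; eone. Proof. exact: ax_S1r. Qed.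
Lemma S2 {e f g : exp} : (e ;; f) ;; g === e ;; (f ;; g). Proof. exact: ax_S2. Qed.
Lemma S3 {e : exp} : ezero ;; e === ezero. Proof. exact: ax_S3. Qed.
Lemma S4 {r s : S} {e f g : exp} : EWeight r s e f ;; g === EWeight r s (e ;; g) (f ;; g). Proof. exact: ax_S4. Qed.
Lemma S5 {b : bexp T} {e f g : exp} : (e +[b] f) ;; g === (e ;; g) +[b] (f ;; g). Proof. exact: ax_S5. Qed.
Lemma S6 {v : Out} {e : exp} : ERet v ;; e === ERet v. Proof. exact: ax_S6. Qed.
Lemma S7 {b c : bexp T} : (ETest b ;; ETest c : exp) === ETest (BAnd b c). Proof. exact: ax_S7. Qed.
Lemma L1 {b : bexp T} {e : exp} : ELoop b e === (e ;; ELoop b e) +[b] eone. Proof. exact: ax_L1. Qed.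
Lemma C1 : (odot 1 : exp) === eone. Proof. exact: ax_C1. Qed.
Lemma C2 {e : exp} : odot 0 ;; e === odot 0. Proof. exact: ax_C2. Qed.
Lemma W1 {r s : S} {e : exp} : EWeight r s e e === odot (r + s) ;; e. Proof. exact: ax_W1. Qed.
Lemma W2 {r s : S} {e f : exp} : EWeight r s e f === EWeight s r f e. Proof. exact: ax_W2. Qed.
Lemma W3 {r s t u : S} {e f g : exp} : EWeight r s e (EWeight t u f g) === EWeight 1 (s * u) (EWeight r (s * t) e f) g. Proof. exact: ax_W3. Qed.
Lemma W4 {r s u : S} {e f : exp} : EWeight (r * u) s e f === EWeight r s (odot u ;; e) f. Proof. exact: ax_W4. Qed.

Lemma g_true {e f : exp} : e +[BOne] f === e.
Proof.
have H : forall g f : exp, g +[BOne] f === ezero +[BZero] g.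
  move=> g f'; apply: wt G3 _.
  apply: wt (cgb (c := BZero) _) _; first by [].
  apply: wt G2 _; exact: cg S3 wr.
apply: wt (H e f) _; apply: wt (ws (H e e)) _; exact: G1.
Qed.

Lemma g_false {e f : exp} : e +[BZero] f === f.
Proof.
apply: wt G3 _; apply: wt (cgb (c := BOne) _) _; first by [].
exact: g_true.
Qed.

Lemma g_neg {b : bexp T} {f g : exp} : f +[b] g === f +[b] (ETest (BNot b) ;; g).
Proof.
apply: wt G3 _. apply: wt G2 _.
apply: wt G3 _; apply: cgb => a /=; by rewrite negbK.
Qed.

Lemma g_bA {b : bexp T} {e : exp} : ETest b ;; e === e +[b] ezero.
Proof.
apply: ws; apply: wt G2 _.
apply: ws; apply: wt (ws G1) _.
apply: wt g_neg _; apply: cg wr _.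
apply: wt (ws S2) _; apply: wt (cseql S7) _.
apply: wt (cseql (ctest (c := BZero) _)) _; first by move=> a /=; rewrite andNb.
exact: S3.
Qed.

Lemma g_under {a c c' : bexp T} {x y z : exp} :
  equivBA (BAnd c (BNot a)) (BAnd c' (BNot a)) ->
  x +[a] (y +[c] z) === x +[a] (y +[c'] z).
Proof.
move=> H.
have K : forall d : bexp T, x +[a] (y +[d] z) === x +[a] (y +[BAnd d (BNot a)] (z +[BNot a] ezero)).
  move=> d; apply: wt g_neg _; apply: cg wr _.
  apply: wt g_bA _; exact: G4.
apply: wt (K c) _; apply: ws; apply: wt (K c') _.
apply: cg wr _; apply: cgb => w; by rewrite (H w).
Qed.

Lemma g_sel {a b : bexp T} {e f : exp} :
  equivBA (BAnd b a) a -> ETest a ;; (e +[b] f) === ETest a ;; e.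
Proof.
move=> H; apply: wt g_bA _; apply: wt G4 _.
apply: wt (cgb H) _; apply: ws; apply: wt g_bA _; apply: ws.
apply: wt (g_under (c' := BZero) _) _.
  by move=> w /=; rewrite andbN.
exact: cg wr g_false.
Qed.

Lemma g_selN {a b : bexp T} {e f : exp} :
  equivBA (BAnd b a) BZero -> ETest a ;; (e +[b] f) === ETest a ;; f.
Proof.
move=> H; apply: wt g_bA _; apply: wt G4 _.
apply: wt (cgb H) _; apply: wt g_false _; apply: ws; exact: g_bA.
Qed.

Lemma g_dup {a : bexp T} {e f : exp} : ETest a ;; e === ETest a ;; f -> e +[a] ezero === f +[a] ezero.
Proof.
move=> H; apply: wt (ws g_bA) _; apply: wt H _; exact: g_bA.
Qed.

Lemma g_sub {a : bexp T} {e f g : exp} : ETest a ;; e === ETest a ;; f -> e +[a] g === f +[a] g.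
Proof.
move=> H; apply: wt G2 _; apply: wt (cg H wr) _.
apply: ws; exact: G2.
Qed.


Lemma od_seq {r : S} {y : exp} : odot r ;; y === EWeight r 0 y ezero.
Proof. apply: wt S4 _; exact: cw S1l S3. Qed.

Lemma kz {r : S} {x z : exp} : EWeight 0 r z x === EWeight 0 r (odot 0) x.
Proof.
apply: wt (cwS (0 * 0) r _ _) _; [by rewrite mul0r | by [] |].
apply: wt W4 _; exact: cw C2 wr.
Qed.

Lemma E2 {r : S} {x z z' : exp} : EWeight r 0 x z === EWeight r 0 x z'.
Proof.
apply: wt W2 _; apply: wt kz _; apply: ws; apply: wt W2 _; exact: kz.
Qed.

Lemma E1 {s : S} {y : exp} : EWeight s 1 y (odot 0) === odot s ;; y.
Proof.
apply: ws; apply: wt od_seq _; apply: wt (E2 (z' := odot 0)) _.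
apply: wt D2 _; apply: cw wr _; rewrite mul0r; exact: wr.
Qed.

Lemma E0 {s : S} {x y : exp} : EWeight 0 s x y === odot s ;; y.
Proof. apply: wt W2 _; apply: wt (E2 (z' := ezero)) _; exact: ws od_seq. Qed.

Lemma od1 {y : exp} : odot 1 ;; y === y.
Proof. apply: wt (cseql C1) _; exact: S1l. Qed.

Lemma odM0 {r s : S} : (odot (r * s) : exp) === odot r ;; odot s.
Proof.
apply: wt W4 _; apply: wt (cw (ws S1r) wr) _; exact: ws od_seq.
Qed.

Lemma odM {r s : S} {y : exp} : odot (r * s) ;; y === odot r ;; (odot s ;; y).
Proof. apply: wt (cseql odM0) _; exact: S2. Qed.

Lemma wR {a r : S} {x y : exp} : EWeight a r x y === EWeight a 1 x (odot r ;; y).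
Proof.
apply: wt W2 _; apply: wt (cwS (1 * r) a _ _) _; [by rewrite mul1r | by [] |].
apply: wt W4 _; exact: W2.
Qed.

Lemma wL {r b : S} {x y : exp} : EWeight r b x y === EWeight 1 b (odot r ;; x) y.
Proof.
apply: wt (cwS (1 * r) b _ _) _; [by rewrite mul1r | by [] |].
exact: W4.
Qed.

Lemma W3' {r t : S} {e f g : exp} : EWeight r 1 e (EWeight t 1 f g) === EWeight 1 1 (EWeight r t e f) g.
Proof.
apply: wt W3 _; rewrite !mul1r; exact: wr.
Qed.

Fixpoint Wl (L : seq (exp * S)) : exp :=
  match L with [::] => odot 0 | x :: L' => EWeight x.2 1 x.1 (Wl L') end.

Lemma Wl_cat (L1 L2 : seq (exp * S)) : Wl (L1 ++ L2) === EWeight 1 1 (Wl L1) (Wl L2).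
Proof.
elim: L1 => [|x L1 IH] /=.
  apply: ws; apply: wt W2 _; apply: wt E1 _; exact: od1.
apply: wt (cw wr IH) _; exact: W3'.
Qed.

Lemma Wl_scale (r : S) (L : seq (exp * S)) : Wl (scale r L) === odot r ;; Wl L.
Proof.
elim: L => [|x L IH] /=.
  apply: wt _ odM0; rewrite mulr0; exact: wr.
apply: wt (cw wr IH) _; apply: ws.
apply: wt od_seq _; apply: wt W2 _; apply: wt D2 _; apply: wt E0 _; apply: wt od1 _.
rewrite mulr1; exact: wR.
Qed.

Lemma Wl_seq (L : seq (exp * S)) (f : exp) : Wl L ;; f === Wl [seq (x.1 ;; f, x.2) | x <- L].
Proof.
elim: L => [|x L IH] /=; first exact: C2.
apply: wt S4 _; exact: cw wr IH.
Qed.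

Lemma Wl_swap (t1 t2 : exp) (w1 w2 : S) (R : exp) :
  EWeight w1 1 t1 (EWeight w2 1 t2 R) === EWeight w2 1 t2 (EWeight w1 1 t1 R).
Proof.
apply: wt W3' _; apply: ws; apply: wt W3' _; exact: cw W2 wr.
Qed.

Lemma Wl_merge (t1 t2 : exp) (w1 w2 : S) (R : exp) : t2 === t1 ->
  EWeight w1 1 t1 (EWeight w2 1 t2 R) === EWeight (w1 + w2) 1 t1 R.
Proof.
move=> H; apply: wt W3' _; apply: wt (cw (cw wr H) wr) _.
apply: wt (cw W1 wr) _; apply: ws; rewrite -{1}[w1 + w2]mul1r; exact: W4.
Qed.

Lemma Wl_zero (t R : exp) : EWeight 0 1 t R === R.
Proof. apply: wt E0 _; exact: od1. Qed.

Lemma Wl_perm (L1 L2 : seq (exp * S)) : Permutation L1 L2 -> Wl L1 === Wl L2.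
Proof.
elim=> [|x l l' _ IH|x y l|l l' l'' _ IH1 _ IH2] /=.
- exact: wr.
- exact: cw wr IH.
- exact: Wl_swap.
- exact: wt IH1 IH2.
Qed.

Lemma Wl_congr (L1 L2 : seq (exp * S)) :
  List.Forall2 (fun x y => x.1 === y.1 /\ x.2 = y.2) L1 L2 -> Wl L1 === Wl L2.
Proof.
elim=> [|x y l l' [H1 H2] _ IH] /=; first exact: wr.
rewrite H2; exact: cw H1 IH.
Qed.


Local Notation outc := (outcome Out Act exp).

Definition term (o : outc) : exp :=
  match o with
  | Acc => eone | Rej => ezero | Ret v => ERet v | Step p e => ESeq (EAct p) e end.
Definition termL (L : seq (outc * S)) : seq (exp * S) := [seq (term x.1, x.2) | x <- L].

Definition oR (o1 o2 : outc) : Prop :=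
  match o1, o2 with
  | Acc, Acc => True | Rej, Rej => True | Ret v, Ret v' => v = v'
  | Step p e, Step p' e' => p = p' /\ e === e'
  | _, _ => False end.

Lemma oR_refl o : oR o o.
Proof. by case: o => //= p e; split=> //; exact: wr. Qed.
Lemma oR_sym o1 o2 : oR o1 o2 -> oR o2 o1.
Proof.
case: o1 => [||v|p e]; case: o2 => [||v'|p' e'] //=; try by move->.
by case=> -> H; split=> //; exact: ws.
Qed.
Lemma oR_trans o1 o2 o3 : oR o1 o2 -> oR o2 o3 -> oR o1 o3.
Proof.
case: o1 => [||v|p e]; case: o2 => [||v'|p' e'] //=; case: o3 => [||v''|p'' e''] //=.
  by move=> -> ->.
by move=> [-> H1] [-> H2]; split=> //; exact: wt H1 H2.
Qed.
Lemma oR_term o1 o2 : oR o1 o2 -> term o1 === term o2.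
Proof.
case: o1 => [||v|p e]; case: o2 => [||v'|p' e'] //=.
all: try (move=> _; exact: wr).
all: try (move=> ->; exact: wr).
case=> -> H; exact: cseqr H.
Qed.

Lemma merge_all (o : outc) (A B : seq (outc * S)) :
  (forall x, List.In x A -> oR x.1 o) ->
  Wl (termL (A ++ B)) === EWeight (\sum_(x <- A) x.2) 1 (term o) (Wl (termL B)).
Proof.
elim: A => [|x A IH] HA /=.
  rewrite big_nil; exact: ws (Wl_zero _ _).
have IH' := IH (fun y Hy => HA y (or_intror Hy)).
rewrite big_cons; apply: wt (cw wr IH') _.
have H1 : term x.1 === term o by apply: oR_term; apply: HA; left.
apply: wt (cw H1 wr) _.
exact: Wl_merge wr.
Qed.

Lemma perm_part (A : Type) (p : pred A) (L : seq A) :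
  Permutation L (filter p L ++ filter (predC p) L).
Proof.
elim: L => [|x L IH] //=.
case: (p x) => /=; first exact: perm_skip.
apply: Permutation_trans (perm_skip x IH) _; exact: Permutation_middle.
Qed.

Lemma perm_map (A B : Type) (f : A -> B) (l l' : seq A) :
  Permutation l l' -> Permutation (map f l) (map f l').
Proof.
elim=> [|x l1 l2 _ IH|x y l1|l1 l2 l3 _ IH1 _ IH2] /=.
- exact: perm_nil.
- exact: perm_skip.
- exact: perm_swap.
- exact: Permutation_trans IH1 IH2.
Qed.

Lemma In_filter (A : Type) (p : pred A) (l : seq A) x : List.In x (filter p l) -> p x.
Proof.
elim: l => [|y l IH] //=; case E: (p y) => /=; last exact: IH.
by case=> [<-|]; [ | exact: IH].
Qed.

Lemma mass_ext (Y : Type) (nu : mw S Y) (P P' : Y -> Prop) :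
  (forall y, P y <-> P' y) -> mass nu P = mass nu P'.
Proof. by move=> H; apply: eq_bigl => x; apply: asbool_equiv_eq. Qed.

Lemma compare (L1 L2 : seq (outc * S)) :
  (forall o, mass L1 (fun o' => oR o' o) = mass L2 (fun o' => oR o' o)) ->
  Wl (termL L1) === Wl (termL L2).
Proof.
suff H : forall n (L1 L2 : seq (outc * S)), (size L1 + size L2 <= n)%N ->
  (forall o, mass L1 (fun o' => oR o' o) = mass L2 (fun o' => oR o' o)) ->
  Wl (termL L1) === Wl (termL L2).
  by apply: H (leqnn _).
elim=> [|n IH] {}L1 {}L2 Hn Hm.
  have [-> ->] : L1 = [::] /\ L2 = [::].
    move: Hn; clear Hm; case: L1 => [|? ?] //; case: L2 => [|? ?] //.
  exact: wr.
case E: (L1 ++ L2) => [|x0 L0].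
  have [E1 E2] : L1 = [::] /\ L2 = [::].
    move: E; clear Hm Hn; case: L1 => [|? ?] //; case: L2 => [|? ?] //.
  rewrite E1 E2; exact: wr.
pose o := x0.1.
pose p := fun x : outc * S => `[< oR x.1 o >].
have Hsplit : forall L, Wl (termL L) ===
    EWeight (mass L (fun o' => oR o' o)) 1 (term o) (Wl (termL (filter (predC p) L))).
  move=> L; rewrite {1}/termL.
  have HP := perm_map _ _ (fun x : outc * S => (term x.1, x.2)) _ _ (perm_part _ p L).
  apply: wt (Wl_perm _ _ HP) _.
  apply: wt (merge_all o _ _ _) _.
    move=> x /(In_filter _ _ _ _) Hx; exact/asboolP.
  rewrite big_filter; exact: wr.
apply: wt (Hsplit L1) _; apply: ws; apply: wt (Hsplit L2) _; apply: ws.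
rewrite Hm; apply: cw wr _; apply: IH.
  have Hc : forall L, size (filter (predC p) L) = count (predC p) L by move=> L; rewrite size_filter.
  rewrite !Hc -count_cat.
  have Hpos : (0 < count p (L1 ++ L2))%N.
    by rewrite E /= /p /o asboolT //; exact: oR_refl.
  have Hcnt := count_predC p (L1 ++ L2).
  rewrite size_cat in Hcnt; lia.
move=> o''; rewrite /mass !big_filter_cond.
case: (pselect (oR o'' o)) => Ho.
  rewrite !big_pred0 // => x; apply/negbTE/negP => /andP [/negP H1 /asboolP H2];
  apply: H1; apply/asboolP; exact: oR_trans H2 Ho.
have Heq : forall x : outc * S, predC p x && `[< oR x.1 o'' >] = `[< oR x.1 o'' >].
  move=> x; case: (boolP `[< oR x.1 o'' >]) => H; rewrite ?andbF ?andbT //.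
  apply/negP => /asboolP Hx; apply: Ho; apply: oR_trans (oR_sym _ _ (asboolW H)) Hx.
rewrite !(eq_bigl _ _ Heq); exact: Hm.
Qed.

Local Notation at_ a := (atom_test a).

Lemma beval_atom (a b : atom T) : beval (at_ a) b = (b == a).
Proof.
rewrite /atom_test.
have -> : forall l : seq T, beval (foldr (fun t acc => BAnd (if a t then BVar t else BNot (BVar t)) acc) BOne l) b
   = all (fun t => b t == a t) l.
  elim=> [|t l IH] //=; rewrite IH; congr (_ && _).
  by case: (a t) => /=; case: (b t).
apply/allP/eqP => [H|-> t _ //]; apply/ffunP => t; apply/eqP; exact: H (mem_enum _ t).
Qed.

Lemma at_le (a : atom T) (b : bexp T) : leA a b -> equivBA (BAnd b (at_ a)) (at_ a).
Proof.
move=> H w /=; rewrite beval_atom; case: eqP => [->|]; by rewrite ?andbT ?andbF.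
Qed.
Lemma at_nle (a : atom T) (b : bexp T) : ~~ leA a b -> equivBA (BAnd b (at_ a)) BZero.
Proof.
move=> H w /=; rewrite beval_atom; case: eqP => [->|]; rewrite ?andbT ?andbF //.
exact: negbTE.
Qed.

Definition aeq (a : atom T) (x y : exp) := ETest (at_ a) ;; x === ETest (at_ a) ;; y.

Lemma aeq_of {a x y} : x === y -> aeq a x y.
Proof. exact: cseqr. Qed.
Lemma aeq_t {a x y z} : aeq a x y -> aeq a y z -> aeq a x z.
Proof. exact: wt. Qed.
Lemma aeq_s {a x y} : aeq a x y -> aeq a y x.
Proof. exact: ws. Qed.
Lemma aeq_w {a r s x x' y y'} : aeq a x x' -> aeq a y y' -> aeq a (EWeight r s x y) (EWeight r s x' y').
Proof.
move=> H1 H2; rewrite /aeq; apply: wt D3 _; apply: ws; apply: wt D3 _; apply: ws.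
exact: cseqr (cw H1 H2).
Qed.
Lemma aeq_od {a r x y} : aeq a x y -> aeq a (odot r ;; x) (odot r ;; y).
Proof.
move=> H; apply: aeq_t (aeq_of od_seq) _; apply: aeq_t _ (aeq_of (ws od_seq)).
exact: aeq_w H (aeq_of wr).
Qed.
Lemma aeq_seql {a x y f} : aeq a x y -> aeq a (x ;; f) (y ;; f).
Proof.
move=> H; rewrite /aeq; apply: wt (ws S2) _; apply: wt (cseql H) _; exact: S2.
Qed.

Definition GSe (l : seq (atom T)) (F : atom T -> exp) : exp :=
  foldr (fun a acc => EGuard (at_ a) (F a) acc) ezero l.
Definition disj (l : seq (atom T)) : bexp T :=
  foldr (fun a acc => BOr (at_ a) acc) BZero l.

Lemma GS_const (e : exp) l : GSe l (fun _ => e) === e +[disj l] ezero.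
Proof.
elim: l => [|a l IH] /=; first exact: ws g_false.
apply: wt (cg wr IH) _.
apply: wt (g_under (c' := BOr (at_ a) (disj l)) _) _.
  by move=> w /=; case: (beval (at_ a) w); rewrite ?andbF.
apply: wt (cgb (c := BAnd (at_ a) (BOr (at_ a) (disj l))) _) _.
  by move=> w /=; case: (beval (at_ a) w).
apply: wt (ws G4) _; exact: cg G1 wr.
Qed.

Lemma GS_sub l F G : (forall a, aeq a (F a) (G a)) -> GSe l F === GSe l G.
Proof.
move=> H; elim: l => [|a l IH] /=; first exact: wr.
apply: wt (g_sub (H a)) _; exact: cg wr IH.
Qed.

Lemma GS_char (e : exp) F : (forall a, aeq a e (F a)) -> e === GSe (enum (atom T)) F.
Proof.
move=> H; apply: wt (ws g_true) _; apply: wt (cgb (c := disj (enum (atom T))) _) _.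
  move=> w /=; apply/esym.
  have : w \in enum (atom T) by rewrite mem_enum.
  elim: (enum (atom T)) => [|a l IH] //=; rewrite inE beval_atom.
  by case/orP => [->//|/IH ->]; rewrite orbT.
apply: wt (ws (GS_const _ _)) _; exact: GS_sub.
Qed.

Definition NFa (e : exp) (a : atom T) : exp := Wl (termL (wderiv star e a)).
Definition NF (e : exp) : exp := GSe (enum (atom T)) (NFa e).

Lemma Wl1 (t : exp) : Wl [:: (t, 1)] === t.
Proof. apply: wt E1 _; exact: od1. Qed.

Lemma termL_cat L1 L2 : termL (L1 ++ L2) = termL L1 ++ termL L2.
Proof. exact: map_cat. Qed.
Lemma termL_scale r L : termL (scale r L) = scale r (termL L).
Proof. by elim: L => [|x L IH] //=; rewrite IH. Qed.

Lemma wLR r s (x y : exp) : EWeight r s x y === EWeight 1 1 (odot r ;; x) (odot s ;; y).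
Proof. apply: wt wL _; exact: wR. Qed.

Definition isAcc (x : outc * S) : bool := if x.1 is Acc then true else false.

Lemma acc_split (L : seq (outc * S)) :
  Wl (termL L) === EWeight 1 (acc_weight L) (Wl (termL (filter (predC isAcc) L))) eone.
Proof.
have HP := perm_map _ _ (fun x : outc * S => (term x.1, x.2)) _ _ (perm_part _ isAcc L).
apply: wt (Wl_perm _ _ HP) _.
apply: wt (merge_all Acc _ _ _) _.
  by move=> [o w] /(In_filter _ _ _ _); rewrite /isAcc /=; case: o.
apply: wt W2 _.
have -> : \sum_(x <- filter isAcc L) x.2 = acc_weight L.
  rewrite big_filter /acc_weight big_mkcond /=; apply: eq_bigr => [[o w]] _.
  by rewrite /isAcc /=; case: o.
exact: wr.
Qed.

Definition gS (f : exp) (a : atom T) (x : outc * S) : seq (outc * S) :=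
  match x.1 with
  | Acc => scale x.2 (wderiv star f a)
  | Rej => [:: (Rej, x.2)]
  | Ret v => [:: (Ret v, x.2)]
  | Step p e' => [:: (Step p (ESeq e' f), x.2)]
  end.

Lemma seqL (f : exp) (a : atom T) (L : seq (outc * S)) :
  aeq a f (NFa f a) ->
  aeq a (Wl [seq (x.1 ;; f, x.2) | x <- termL L]) (Wl (termL (flatten [seq gS f a x | x <- L]))).
Proof.
move=> Hf; elim: L => [|[o w] L IH] /=; first exact: aeq_of wr.
rewrite termL_cat; apply: aeq_t _ (aeq_of (ws (Wl_cat _ _))).
apply: aeq_t (aeq_of wL) _; apply: aeq_w IH.
rewrite /gS /=; case: o => [||v|p e'] /=.
- rewrite termL_scale; apply: aeq_t _ (aeq_of (ws (Wl_scale _ _))).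
  apply: aeq_t (aeq_of (cseqr S1l)) _; exact: aeq_od Hf.
- apply: aeq_of; apply: wt (cseqr S3) _; exact: ws E1.
- apply: aeq_of; apply: wt (cseqr S6) _; exact: ws E1.
- apply: aeq_of; apply: wt (cseqr S2) _; exact: ws E1.
Qed.

Definition gL (b : bexp T) (e : exp) (c : S) (x : outc * S) : seq (outc * S) :=
  match x.1 with
  | Acc => [::]
  | Rej => [:: (Rej, c * x.2)]
  | Ret v => [:: (Ret v, c * x.2)]
  | Step p e' => [:: (Step p (ESeq e' (ELoop b e)), c * x.2)]
  end.

Lemma loopL (b : bexp T) (e : exp) (c : S) (L : seq (outc * S)) :
  Wl (scale c [seq (x.1 ;; ELoop b e, x.2) | x <- termL (filter (predC isAcc) L)])
  === Wl (termL (flatten [seq gL b e c x | x <- L])).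
Proof.
elim: L => [|[o w] L IH] /=; first exact: wr.
rewrite /gL /isAcc /=; case: o => [||v|p e'] //=; apply: cw _ IH.
- exact: S3.
- exact: S6.
- exact: S2.
Qed.

Lemma FT_atom (e : exp) (a : atom T) : aeq a e (NFa e a).
Proof.
elim: e a => [p|b|b e IHe f IHf|e IHe f IHf|b e IHe|v|r s e IHe f IHf] a.
- rewrite /NFa /=; apply: aeq_of; apply: ws; apply: wt (Wl1 _) _; exact: ws S1r.
- rewrite /NFa /=; case E: (leA a b); apply: aeq_t _ (aeq_of (ws (Wl1 _))); rewrite /aeq.
  + apply: wt S7 _; apply: ws; apply: wt S7 _; apply: ctest => w /=.
    rewrite beval_atom; case: eqP => [->|] //=; by move: E; rewrite /leA => ->.
  + apply: wt S7 _; apply: ws; apply: wt S7 _; apply: ctest => w /=.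
    rewrite beval_atom; case: eqP => [->|] //=; by move: E; rewrite /leA => ->.
- rewrite /NFa /=; case E: (leA a b).
  + apply: aeq_t (g_sel (at_le _ _ E)) _; exact: IHe.
  + apply: aeq_t (g_selN (at_nle _ _ (negbT E))) _; exact: IHf.
- rewrite /NFa /=.
  apply: aeq_t (aeq_seql (IHe a)) _.
  apply: aeq_t (aeq_of (Wl_seq _ _)) _.
  exact: seqL (IHf a).
- rewrite /NFa /=; case E: (leA a b) => /=.
  + set s := acc_weight (wderiv star e a).
    set fN := Wl (termL (filter (predC isAcc) (wderiv star e a))).
    have He : e === EGuard (at_ a) (EWeight 1 s fN eone) e.
      apply: wt (ws G1) _; apply: g_sub; apply: aeq_t (IHe a) _.
      exact: aeq_of (acc_split _).
    apply: aeq_t (rule_L2 b He) _.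
    apply: aeq_t (g_sel (at_le _ _ E)) _; rewrite mulr1.
    apply: aeq_of; apply: wt (cseqr (Wl_seq _ _)) _.
    apply: wt (ws (Wl_scale _ _)) _.
    exact: loopL.
  + apply: aeq_t (aeq_of L1) _.
    apply: aeq_t (g_selN (at_nle _ _ (negbT E))) _; exact: aeq_of (ws (Wl1 _)).
- rewrite /NFa /=; exact: aeq_of (ws (Wl1 _)).
- rewrite /NFa /= termL_cat !termL_scale.
  apply: aeq_t (aeq_w (IHe a) (IHf a)) _.
  apply: aeq_of; apply: wt (wLR _ _ _ _) _; apply: ws; apply: wt (Wl_cat _ _) _.
  exact: cw (Wl_scale _ _) (Wl_scale _ _).
Qed.

Lemma FT (e : exp) : e === NF e.
Proof. apply: GS_char => a; exact: FT_atom. Qed.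


Section Sys.
Variables (X : finType) (h : X -> exp).

Lemma hsharp_GS (F : atom T -> sterm S T Act Out X) l :
  hsharp h (GS l F) = GSe l (fun a => hsharp h (F a)).
Proof. by elim: l => //= a l ->. Qed.

Lemma hsharp_WS (I : Type) (idx : seq I) (r : I -> S) (F : I -> sterm S T Act Out X) :
  hsharp h (WS idx r F) = Wl [seq (hsharp h (F d), r d) | d <- idx].
Proof. by elim: idx => //= d idx ->. Qed.

Lemma deriv_GSe l F (a : atom T) : a \in l -> wderiv star (GSe l F) a = wderiv star (F a) a.
Proof.
elim: l => [|b l IH] //=; rewrite inE /leA beval_atom.
by case: eqP => [->//|_] /= /IH.
Qed.

Lemma mass_cat (Y : Type) (L1 L2 : mw S Y) P : mass (L1 ++ L2) P = mass L1 P + mass L2 P.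
Proof. exact: big_cat. Qed.
Lemma mass_scale (Y : Type) r (L : mw S Y) P : mass (scale r L) P = r * mass L P.
Proof. by rewrite /mass /scale big_map mulr_sumr. Qed.
Lemma mass1 (Y : Type) (y : Y) (w : S) (P : Y -> Prop) : mass [:: (y, w)] P = if `[< P y >] then w else 0.
Proof. by rewrite /mass big_cons big_nil /= addr0. Qed.

Lemma mass_Wl L (a : atom T) P :
  mass (wderiv star (Wl L) a) P = \sum_(x <- L) x.2 * mass (wderiv star x.1 a) P.
Proof.
elim: L => [|x L IH] /=.
  rewrite big_nil /mass !big_cons big_nil /= !mul0r.
  by case: (`[< P Acc >]); case: (`[< P Rej >]); rewrite ?addr0.
by rewrite mass_cat !mass_scale IH mul1r big_cons.
Qed.

Definition hmap (d : outcome Out Act X) : outc :=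
  match d with
  | Acc => Acc | Rej => Rej | Ret v => Ret v | Step p x' => Step p (ESeq eone (h x')) end.

Lemma mass_sys d (a : atom T) P :
  mass (wderiv star (hsharp h (sys S T d)) a) P = if `[< P (hmap d) >] then 1 else 0.
Proof. by case: d => [||v|p x'] /=; rewrite mass1. Qed.

Lemma supp_sum (nu : mw S (outcome Out Act X)) (Qb : pred (outcome Out Act X)) :
  \sum_(d <- supp nu) ev nu d * (if Qb d then 1 else 0) = \sum_(x <- nu | Qb x.1) x.2.
Proof.
rewrite /supp big_filter big_mkcond /=.
transitivity (\sum_(d <- undup (map fst nu) | Qb d) ev nu d).
  rewrite [RHS]big_mkcond; apply: eq_bigr => d _.
  case: (ev nu d =P 0) => [->|_] /=; first by case: (Qb d).
  by case: (Qb d); rewrite ?mulr1 ?mulr0.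
have Hev : forall d, ev nu d = \sum_(x <- nu | x.1 == d) x.2.
  move=> d; apply: eq_bigl => x; apply/asboolP/eqP; by [].
rewrite (eq_bigr (fun d => \sum_(x <- nu | x.1 == d) x.2)); last by move=> d _; exact: Hev.
rewrite (exchange_big_dep xpredT) //=.
rewrite [RHS]big_mkcond; apply: eq_big_seq => x Hx.
rewrite big_mkcond (bigD1_seq x.1) /=; last exact: undup_uniq.
  rewrite eqxx andbT big1 ?addr0 // => d /negbTE Hd.
  by rewrite eq_sym Hd andbF.
by rewrite mem_undup; apply/mapP; exists x.
Qed.

Lemma comp (beta : wgkat_trans S T Act Out X) x (a : atom T) (P : outc -> Prop) :
  mass (wderiv star (hsharp h (tau beta x)) a) P = mass (beta x a) (fun d => P (hmap d)).
Proof.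
rewrite /tau hsharp_GS deriv_GSe ?mem_enum // hsharp_WS mass_Wl big_map /=.
under eq_bigr do rewrite mass_sys.
exact: (supp_sum _ (fun d => `[< P (hmap d) >])).
Qed.

Lemma main_gen (beta : wgkat_trans S T Act Out X) (Qt : Type) (q : exp -> Qt)
  (q_ker : forall e f, q e = q f <-> e === f)
  (dbar : wgkat_trans S T Act Out Qt)
  (q_hom : is_hom (@wderiv S star T Act Out) dbar q) :
  is_solution star beta h <-> is_hom beta dbar (fun x => q (h x)).
Proof.
have qS1 : forall x', q (ESeq eone (h x')) = q (h x') by move=> x'; apply/q_ker; exact: S1l.
split.
- move=> Hsol y a.
  have -> : q (h y) = q (hsharp h (tau beta y)) by apply/q_ker; exact: Hsol.
  have [H1 H2 H3 H4] := q_hom (hsharp h (tau beta y)) a.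
  split.
  + rewrite H1 /ev comp; apply: mass_ext => d; case: d => [||v'|p' x'] /=; split=> HH; inversion HH; subst; done.
  + rewrite H2 /ev comp; apply: mass_ext => d; case: d => [||v'|p' x'] /=; split=> HH; inversion HH; subst; done.
  + move=> v; rewrite H3 /ev comp; apply: mass_ext => d; case: d => [||v'|p' x'] /=; split=> HH; inversion HH; subst; done.
  + move=> p z; rewrite H4 comp; apply: mass_ext => d; case: d => [||v|p' x'] /=;
      try by split=> [[y' [E _]]|[y' [E _]]].
    split.
      move=> [y' [[Ep Ey] Hq]]; exists x'; rewrite Ep; split=> //; rewrite -qS1 Ey; exact: Hq.
    move=> [y' [[Ep Ey] Hq]]; exists (ESeq eone (h x')); rewrite Ep; split=> //; rewrite qS1 Ey; exact: Hq.
- move=> Hhom y.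
  apply: wt (FT _) _; apply: ws; apply: wt (FT _) _; apply: ws.
  rewrite /NF; apply: GS_sub => a; apply: aeq_of; rewrite /NFa; apply: compare => o.
  have [H1 H2 H3 H4] := q_hom (h y) a; have [K1 K2 K3 K4] := Hhom y a.
  rewrite comp; case: o => [||v|p e0].
  + transitivity (ev (wderiv star (h y) a) Acc).
      apply: mass_ext => o'; case: o' => [||v'|p' x'] /=; split=> HH; inversion HH; subst; done.
    rewrite -H1 K1; apply: mass_ext => d; case: d => [||v'|p' x'] /=; split=> HH; inversion HH; subst; done.
  + transitivity (ev (wderiv star (h y) a) Rej).
      apply: mass_ext => o'; case: o' => [||v'|p' x'] /=; split=> HH; inversion HH; subst; done.
    rewrite -H2 K2; apply: mass_ext => d; case: d => [||v'|p' x'] /=; split=> HH; inversion HH; subst; done.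
  + transitivity (ev (wderiv star (h y) a) (Ret v)).
      apply: mass_ext => o'; case: o' => [||v'|p' x'] /=; split=> HH; try (inversion HH; subst; done); by rewrite HH.
    rewrite -H3 K3; apply: mass_ext => d; case: d => [||v'|p' x'] /=; split=> HH; try (inversion HH; subst; done); by rewrite HH.
  + transitivity (mass (wderiv star (h y) a) (fun o' => exists y', o' = Step p y' /\ q y' = q e0)).
      apply: mass_ext => o'; case: o' => [||v|p' e'] /=; try by split=> [//|[y' [E _]]].
      split=> [[-> He]|[y' [[-> ->] Hq]]].
        by exists e'; split=> //; apply/q_ker.
      by split=> //; apply/q_ker.
    rewrite -H4 K4; apply: mass_ext => d; case: d => [||v|p' x'] /=; try by split=> [[y' [E _]]|].
    split=> [[y' [[-> <-] Hq]]|[-> He]].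
      by split=> //; apply/q_ker; rewrite qS1.
    by exists x'; split=> //; rewrite -qS1; apply/q_ker.
Qed.

End Sys.
End Eqns.

Theorem mainTheorem9
  (S : pzSemiRingType) (star : S -> S)
  (HSpos : positive_sr S) (HSref : refinement_sr S) (HSconway : conway_star star)
  (T : finType) (Act Out : eqType)
  (X : finType) (beta : wgkat_trans S T Act Out X)
  (Q : Type) (q : exp S T Act Out -> Q)
  (q_surj : forall y : Q, exists e, q e = y)
  (q_ker : forall e f, q e = q f <-> wequiv star e f)
  (dbar : wgkat_trans S T Act Out Q)
  (q_hom : is_hom (@wderiv S star T Act Out) dbar q)
  (h : X -> exp S T Act Out) :
  is_solution star beta h <-> is_hom beta dbar (fun x => q (h x)).
Proof.
exact: (@main_gen S star T Act Out X h beta Q q q_ker dbar q_hom).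
Qed.
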